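(* Let $\Delta$ be a simplicial polytopal fan in $\mathbb{R}^d$ with ray generators $\mathbf{v}_1,\ldots,\mathbf{v}_n$. The set \[ \mathcal{U}=\{U\in\mathbb{R}^{m\times d}\colon|\hat{P}^\Delta(U,\mathbf{y})|=1\text{ for all }\mathbf{y}\in\mathbb{R}^m\}\subseteq\mathbb{R}^{m\times d} \] is semi-algebraic.
   Context: A set is semi-algebraic if it is a finite Boolean combination of sets of the form $\{\mathbf{x}\colon f_i(\mathbf{x})\ge0,\ i=1,\ldots,k\}$ with polynomials $f_i$. A fan is simplicial if every cone is generated by linearly independent vectors; polytopal if it is the normal fan of a polytope. $h_P(\mathbf{u})=\max_{\mathbf{x}\in P}\langle\mathbf{x},\mathbf{u}\rangle$. The deformation cone $\mathcal{P}(\Delta)$ is the set of polytopes whose normal fan is coarsened by $\Delta$, identified via support vectors $\mathbf{h}=(h_P(\mathbf{v}_i))_i$ with a closed polyhedral cone in $\mathbb{R}^n$. For $U\in\mathbb{R}^{m\times d}$ with rows $\mathbf{u}^{(1)},\ldots,\mathbf{u}^{(m)}$ and $\mathbf{y}\in\mathbb{R}^m$, the least-squares estimator $\hat{P}^\Delta(U,\mathbf{y})\subseteq\mathbb{R}^n$ is the set of support vectors of polytopes $P\in\mathcal{P}(\Delta)$ minimizing $\frac1m\sum_i(h_P(\mathbf{u}^{(i)})-y^{(i)})^2$. *)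

(* Defs.v *)
From HB Require Import structures.
From mathcomp Require Import all_boot all_order all_algebra.
From mathcomp Require Import reals.
From mathcomp Require mpoly.
From Stdlib Require List.
Set Implicit Arguments. Unset Strict Implicit. Unset Printing Implicit Defensive.
Import Order.TTheory GRing.Theory Num.Theory.
Local Open Scope ring_scope.

Section Defs.
Variable R : realType.

Definition dotv (d : nat) (x u : 'rV[R]_d) : R := \sum_(j < d) x 0 j * u 0 j.

Definition cone_of (d n : nat) (V : 'I_n -> 'rV[R]_d) (S : {set 'I_n})
  : 'rV[R]_d -> Prop :=
  fun u => exists lam : 'I_n -> R,
    (forall i, 0 <= lam i) /\ (forall i, i \notin S -> lam i = 0) /\
    u = \sum_(i < n) lam i *: V i.

Definition lin_indep (d n : nat) (V : 'I_n -> 'rV[R]_d) (S : {set 'I_n}) : Prop :=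
  forall lam : 'I_n -> R, (forall i, i \notin S -> lam i = 0) ->
    \sum_(i < n) lam i *: V i = 0 -> forall i, lam i = 0.

(* A polytope is represented as the convex hull of a nonempty finite list X *)
Definition conv (d : nat) (X : seq 'rV[R]_d) : 'rV[R]_d -> Prop :=
  fun x => exists lam : 'I_(size X) -> R,
    (forall i, 0 <= lam i) /\ \sum_i lam i = 1 /\
    x = \sum_(i < size X) lam i *: X`_i.

(* support function h_P(u) = max_{x in P} <x,u>, for P = conv X, X nonempty
   (the max of a linear form over conv X is attained on X) *)
Definition hsupp (d : nat) (X : seq 'rV[R]_d) (u : 'rV[R]_d) : R :=
  \big[Num.max/dotv (head 0 X) u]_(x <- X) dotv x u.

(* normal cone of the face F = argmax_P <., w> :
   N_F = { u | F is contained in argmax_P <., u> } *)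
Definition ncone (d : nat) (X : seq 'rV[R]_d) (w : 'rV[R]_d) : 'rV[R]_d -> Prop :=
  fun u => forall x, conv X x -> dotv x w = hsupp X w -> dotv x u = hsupp X u.

Definition simplicial_fan (d n : nat) (V : 'I_n -> 'rV[R]_d)
  (Delta : {set {set 'I_n}}) : Prop :=
  (set0 \in Delta) /\
  (forall S T : {set 'I_n}, S \in Delta -> T \subset S -> T \in Delta) /\
  (forall S T : {set 'I_n}, S \in Delta -> T \in Delta -> forall u,
      (cone_of V S u /\ cone_of V T u) <-> cone_of V (S :&: T) u) /\
  (forall S, S \in Delta -> lin_indep V S) /\
  (forall i, [set i] \in Delta).

Definition is_normal_fan_of (d n : nat) (V : 'I_n -> 'rV[R]_d)
  (Delta : {set {set 'I_n}}) (X : seq 'rV[R]_d) : Prop :=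
  (forall S, S \in Delta -> exists w, forall u, cone_of V S u <-> ncone X w u) /\
  (forall w, exists2 S, S \in Delta & forall u, cone_of V S u <-> ncone X w u).

Definition polytopal (d n : nat) (V : 'I_n -> 'rV[R]_d)
  (Delta : {set {set 'I_n}}) : Prop :=
  exists X : seq 'rV[R]_d, X != [::] /\ is_normal_fan_of V Delta X.

Definition coarsened_by (d n : nat) (V : 'I_n -> 'rV[R]_d)
  (Delta : {set {set 'I_n}}) (X : seq 'rV[R]_d) : Prop :=
  forall S, S \in Delta -> exists w, forall u, cone_of V S u -> ncone X w u.

Definition in_defcone (d n : nat) (V : 'I_n -> 'rV[R]_d)
  (Delta : {set {set 'I_n}}) (X : seq 'rV[R]_d) : Prop :=
  X != [::] /\ coarsened_by V Delta X.

Definition suppvec (d n : nat) (V : 'I_n -> 'rV[R]_d) (X : seq 'rV[R]_d)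
  : 'rV[R]_n := \row_i hsupp X (V i).

Definition lsq_loss (m d : nat) (U : 'M[R]_(m, d)) (y : 'rV[R]_m)
  (X : seq 'rV[R]_d) : R :=
  m%:R^-1 * \sum_(i < m) (hsupp X (row i U) - y 0 i) ^+ 2.

Definition lse (m d n : nat) (V : 'I_n -> 'rV[R]_d)
  (Delta : {set {set 'I_n}}) (U : 'M[R]_(m, d)) (y : 'rV[R]_m)
  : 'rV[R]_n -> Prop :=
  fun h => exists X, in_defcone V Delta X /\ h = suppvec V X /\
    forall X', in_defcone V Delta X' -> lsq_loss U y X <= lsq_loss U y X'.

Definition is_singleton (T : Type) (A : T -> Prop) : Prop :=
  exists a, forall b, A b <-> b = a.

Inductive sa_formula (N : nat) : Type :=
| SABasic of seq (mpoly.mpoly N R)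
| SANot of sa_formula N
| SAAnd of sa_formula N & sa_formula N
| SAOr of sa_formula N & sa_formula N.

Fixpoint sa_holds (N : nat) (f : sa_formula N) (x : 'I_N -> R) : Prop :=
  match f with
  | SABasic ps => forall p, List.In p ps -> 0 <= mpoly.meval x p
  | SANot g => ~ sa_holds g x
  | SAAnd g h => sa_holds g x /\ sa_holds h x
  | SAOr g h => sa_holds g x \/ sa_holds h x
  end.

Definition semialgebraic (N : nat) (A : ('I_N -> R) -> Prop) : Prop :=
  exists f : sa_formula N, forall x, A x <-> sa_holds f x.

Definition semialgebraic_mx (m d : nat) (A : 'M[R]_(m, d) -> Prop) : Prop :=
  semialgebraic (fun x : 'I_(m * d) -> R => A (vec_mx (\row_k x k))).

End Defs.

(* Main.v *)
Require Import Defs.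
From HB Require Import structures.
From mathcomp Require Import all_boot all_order all_algebra.
From mathcomp Require Import reals.
From mathcomp Require Import ordered_qelim qe_rcf.
From mathcomp Require Import mpoly.
From mathcomp Require Import zify.
From Stdlib Require Import Classical FunctionalExtensionality.
Set Implicit Arguments. Unset Strict Implicit. Unset Printing Implicit Defensive.
Import Order.TTheory GRing.Theory Num.Theory.
Local Open Scope ring_scope.

Section Conv.
Variable R : realType.
Variable N : nat.

Fixpoint tp (t : GRing.term R) : {mpoly R[N]} :=
  match t with
  | GRing.Var i => match insub i with Some j => 'X_j | None => 0 end
  | GRing.Const c => c%:MP
  | GRing.NatConst n => n%:R
  | GRing.Add a b => tp a + tp b
  | GRing.Opp a => - tp a
  | GRing.NatMul a n => tp a *+ n
  | GRing.Mul a b => tp a * tp b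
  | GRing.Exp a n => tp a ^+ n
  | _ => 0
  end.

Definition env (x : 'I_N -> R) := map x (enum 'I_N).

Lemma tpE x t : GRing.rterm t -> meval x (tp t) = GRing.eval (env x) t.
Proof.
elim: t => //=.
- move=> i _; case: insubP => [j lt eq|ge].
    rewrite mevalXU /env -eq (nth_map j); last by rewrite size_enum_ord eq.
    by congr (x _); apply: val_inj; rewrite /= nth_enum_ord.
  by rewrite raddf0 nth_default // size_map size_enum_ord leqNgt.
- by move=> c _; rewrite mevalC.
- by move=> k _; rewrite mevalMn meval1.
- move=> a IHa b IHb /andP[ra rb]. by rewrite mevalD IHa // IHb.
- by move=> a IHa ra; rewrite mevalN IHa.
- by move=> a IHa k ra; rewrite mevalMn IHa.
- by move=> a IHa b IHb /andP[ra rb]; rewrite mevalM IHa // IHb.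
- move=> a IHa k ra; elim: k => [|k IHk]; first by rewrite !expr0 meval1.
  by rewrite !exprS mevalM IHk IHa.
Qed.

Definition sa_true : sa_formula R N := SABasic [::].
Definition sa_ge (p : {mpoly R[N]}) : sa_formula R N := SABasic [:: p].

Fixpoint tf (f : ord.formula R) : sa_formula R N :=
  match f with
  | ord.Bool true => sa_true
  | ord.Bool false => SANot sa_true
  | ord.Equal a b => SAAnd (sa_ge (tp a - tp b)) (sa_ge (tp b - tp a))
  | ord.Lt a b => SANot (sa_ge (tp a - tp b))
  | ord.Le a b => sa_ge (tp b - tp a)
  | ord.And f g => SAAnd (tf f) (tf g)
  | ord.Or f g => SAOr (tf f) (tf g)
  | ord.Implies f g => SAOr (SANot (tf f)) (tf g)
  | ord.Not f => SANot (tf f)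
  | _ => sa_true
  end.

Lemma sa_geE x p : sa_holds (sa_ge p) x <-> 0 <= meval x p.
Proof.
split; first by apply; left.
by move=> H q [<-|[]].
Qed.

Lemma sa_trueE x : sa_holds sa_true x <-> Logic.True.
Proof. by split=> // _ p []. Qed.
Lemma sa_NotE x (f : sa_formula R N) : sa_holds (SANot f) x <-> ~ sa_holds f x.
Proof. by []. Qed.
Lemma sa_AndE x (f g : sa_formula R N) : sa_holds (SAAnd f g) x <-> sa_holds f x /\ sa_holds g x.
Proof. by []. Qed.
Lemma sa_OrE x (f g : sa_formula R N) : sa_holds (SAOr f g) x <-> sa_holds f x \/ sa_holds g x.
Proof. by []. Qed.

Arguments sa_holds : simpl never.

Lemma tfE x f : ord.qf_form f -> ord.rformula f ->
  (sa_holds (tf f) x <-> ord.holds (env x) f).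
Proof.
elim: f => //=.
- by case => _ _; rewrite ?sa_NotE sa_trueE.
- move=> a b _ /andP[ra rb]; rewrite sa_AndE !sa_geE !mevalB !tpE // !subr_ge0.
  by split=> [[]|->]; [move=> *; apply: le_anti; apply/andP|].
- move=> a b _ /andP[ra rb]; rewrite sa_NotE !sa_geE !mevalB !tpE // subr_ge0.
  by split=> [/negP|H]; [rewrite ltNge|apply/negP; rewrite -ltNge].
- by move=> a b _ /andP[ra rb]; rewrite !sa_geE !mevalB !tpE // subr_ge0.
- move=> f IHf g IHg /andP[qf qg] /andP[rf rg].
  by rewrite sa_AndE (IHf qf rf) (IHg qg rg).
- move=> f IHf g IHg /andP[qf qg] /andP[rf rg].
  by rewrite sa_OrE (IHf qf rf) (IHg qg rg).
- move=> f IHf g IHg /andP[qf qg] /andP[rf rg].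
  rewrite sa_OrE sa_NotE (IHf qf rf) (IHg qg rg); split; first by case.
  by case: (Classical_Prop.classic (ord.holds (env x) f)) => H I; [right; apply: I | left].
- by move=> f IHf qf rf; rewrite sa_NotE (IHf qf rf).
Qed.

Lemma qe_sa (f : ord.formula R) : exists sf : sa_formula R N,
  forall x, sa_holds sf x <-> ord.holds (env x) f.
Proof.
have P := ord.quantifier_elim_rformP (@wf_QE_wproj R) (@valid_QE_wproj R).
have W := ord.quantifier_elim_wf (@wf_QE_wproj R) (ord.to_rform_rformula f).
move: W P; set q := ord.quantifier_elim _ _ => /andP[qq rq] P.
exists (tf q) => x; rewrite (tfE x qq rq) -(ord.to_rformP _ f).
have P' := P (env x) _ (ord.to_rform_rformula f).
by split => [/(ord.qf_evalP _ qq)/P' | /P'/(ord.qf_evalP _ qq)].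
Qed.
End Conv.
Section FO.
Variable R : realType.
Local Notation env := (nat -> R).

Definition nth0 (e : seq R) : env := fun i => nth 0 e i.
Definition fodef (P : env -> Prop) :=
  exists f : ord.formula R, forall e, P (nth0 e) <-> ord.holds e f.
Definition pf (F : env -> R) :=
  exists t : GRing.term R, forall e, F (nth0 e) = GRing.eval e t.

Lemma def_ext P Q : fodef P -> (forall g, P g <-> Q g) -> fodef Q.
Proof. by case=> f Hf H; exists f => e; rewrite -H. Qed.

Lemma pf_ext F G : pf F -> (forall g, F g = G g) -> pf G.
Proof. by case=> t Ht H; exists t => e; rewrite -H. Qed.

Lemma pf_var i : pf (fun g => g i).
Proof. by exists (@GRing.Var R i). Qed.
Lemma pf_const c : pf (fun _ => c).
Proof. by exists (@GRing.Const R c). Qed.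
Lemma pf_add F G : pf F -> pf G -> pf (fun g => F g + G g).
Proof. by case=> t Ht [u Hu]; exists (GRing.Add t u) => e /=; rewrite Ht Hu. Qed.
Lemma pf_opp F : pf F -> pf (fun g => - F g).
Proof. by case=> t Ht; exists (GRing.Opp t) => e /=; rewrite Ht. Qed.
Lemma pf_sub F G : pf F -> pf G -> pf (fun g => F g - G g).
Proof. by move=> HF HG; apply: pf_add => //; apply: pf_opp. Qed.
Lemma pf_mul F G : pf F -> pf G -> pf (fun g => F g * G g).
Proof. by case=> t Ht [u Hu]; exists (GRing.Mul t u) => e /=; rewrite Ht Hu. Qed.
Lemma pf_sum (I : Type) (s : seq I) (F : I -> env -> R) :
  (forall i, pf (F i)) -> pf (fun g => \sum_(i <- s) F i g).
Proof.
move=> H; elim: s => [|i s IH].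
  by apply: (pf_ext (pf_const 0)) => g; rewrite big_nil.
by apply: (pf_ext (pf_add (H i) IH)) => g; rewrite big_cons.
Qed.

Lemma def_le F G : pf F -> pf G -> fodef (fun g => F g <= G g).
Proof. by case=> t Ht [u Hu]; exists (ord.Le t u) => e /=; rewrite Ht Hu. Qed.
Lemma def_eq F G : pf F -> pf G -> fodef (fun g => F g = G g).
Proof. by case=> t Ht [u Hu]; exists (ord.Equal t u) => e /=; rewrite Ht Hu. Qed.
Lemma def_bool (b : bool) : fodef (fun _ => b).
Proof. by exists (ord.Bool b). Qed.
Lemma def_and P Q : fodef P -> fodef Q -> fodef (fun g => P g /\ Q g).
Proof. by case=> f Hf [h Hh]; exists (ord.And f h) => e /=; rewrite Hf Hh. Qed.
Lemma def_or P Q : fodef P -> fodef Q -> fodef (fun g => P g \/ Q g).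
Proof. by case=> f Hf [h Hh]; exists (ord.Or f h) => e /=; rewrite Hf Hh. Qed.
Lemma def_imp P Q : fodef P -> fodef Q -> fodef (fun g => P g -> Q g).
Proof. by case=> f Hf [h Hh]; exists (ord.Implies f h) => e /=; rewrite Hf Hh. Qed.
Lemma def_not P : fodef P -> fodef (fun g => ~ P g).
Proof. by case=> f Hf; exists (ord.Not f) => e /=; rewrite Hf. Qed.

Definition upd (g : env) i x : env := fun j => if j == i then x else g j.

Lemma nth0_set e i x : nth0 (set_nth 0 e i x) = upd (nth0 e) i x.
Proof. by apply: functional_extensionality => j; rewrite /nth0 /upd nth_set_nth. Qed.

Lemma def_ex1 i P : fodef P -> fodef (fun g => exists x, P (upd g i x)).
Proof.
case=> f Hf; exists (ord.Exists i f) => e /=.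
by split=> -[x Hx]; exists x; [apply/Hf; rewrite nth0_set | rewrite -nth0_set; apply/Hf].
Qed.

Definition updf (g : env) f k (v : env) : env :=
  fun j => if (f <= j < f + k)%N then v (j - f)%N else g j.

Lemma updfS g f k v : updf g f k.+1 v = upd (updf g f k v) (f + k) (v k).
Proof.
apply: functional_extensionality => j; rewrite /updf /upd.
case: eqP => [->|ne]; first by rewrite leq_addr addnS ltnSn addKn.
by rewrite addnS ltnS (leq_eqVlt j) (introF eqP ne).
Qed.

Lemma def_ex_updf f k P : fodef P -> fodef (fun g => exists v, P (updf g f k v)).
Proof.
elim: k P => [|k IH] P HP.
  have E g v : updf g f 0 v = g.
    by apply: functional_extensionality => j; rewrite /updf addn0; case: leqP => //= H; rewrite ltnNge H.
  by apply: (def_ext HP) => g; split=> [H|[v]]; [exists (fun _ => 0)|]; rewrite E.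
have := IH _ (def_ex1 (f + k) HP).
move=> H; apply: (def_ext H) => g; split.
  case=> v [x Hx]; exists (fun j => if j == k then x else v j).
  rewrite updfS eqxx; congr (P (upd _ _ _)): Hx.
  apply: functional_extensionality => j; rewrite /updf.
  case: ifP => // /andP[le lt]; case: eqP => // E; lia.
case=> v; rewrite updfS => Hv; exists v; by exists (v k).
Qed.

Lemma def_allseq (T : eqType) (s : seq T) (P : T -> env -> Prop) :
  (forall t, fodef (P t)) -> fodef (fun g => forall t, t \in s -> P t g).
Proof.
move=> H; elim: s => [|t s IH].
  by apply: (def_ext (def_bool true)) => g; split.
apply: (def_ext (def_and (H t) IH)) => g; split.
  by case=> Ht Hs u; rewrite in_cons => /orP[/eqP->|/Hs].
by move=> Hu; split=> [|u us]; apply: Hu; rewrite in_cons ?eqxx ?us ?orbT.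
Qed.

Lemma def_exseq (T : eqType) (s : seq T) (P : T -> env -> Prop) :
  (forall t, fodef (P t)) -> fodef (fun g => exists t, t \in s /\ P t g).
Proof.
move=> H; elim: s => [|t s IH].
  by apply: (def_ext (def_bool false)) => g; split => // -[t []].
apply: (def_ext (def_or (H t) IH)) => g; split.
  case=> [Ht|[u [us Hu]]]; first by exists t; rewrite mem_head.
  by exists u; rewrite in_cons us orbT.
by case=> u []; rewrite in_cons => /orP[/eqP->|us Hu]; [left|right; exists u].
Qed.

Lemma def_allfin (T : finType) (P : T -> env -> Prop) :
  (forall t, fodef (P t)) -> fodef (fun g => forall t, P t g).
Proof.
move=> H; apply: (def_ext (def_allseq (enum T) H)) => g.
by split=> Hg t; [apply: Hg; rewrite mem_enum|move=> _; apply: Hg].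
Qed.

Lemma def_exfin (T : finType) (P : T -> env -> Prop) :
  (forall t, fodef (P t)) -> fodef (fun g => exists t, P t g).
Proof.
move=> H; apply: (def_ext (def_exseq (enum T) H)) => g.
split=> -[t]; first by case=> _ Ht; exists t.
by move=> Ht; exists t; rewrite mem_enum.
Qed.

Lemma def_iff P Q : fodef P -> fodef Q -> fodef (fun g => P g <-> Q g).
Proof.
move=> HP HQ; apply: (def_ext (def_and (def_imp HP HQ) (def_imp HQ HP))) => g.
by split=> -[].
Qed.

Definition agree f (g g' : env) := forall i, (i < f)%N -> g i = g' i.
Definition rok f a b (F : env -> 'M[R]_(a, b)) :=
  (forall g g', agree f g g' -> F g = F g') /\ (forall i j, pf (fun g => F g i j)).
Definition rdv (g : env) b k : 'rV[R]_k := \row_(i < k) g (b + i)%N.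

Lemma rok_rdv f b k : (b + k <= f)%N -> rok f (fun g => rdv g b k).
Proof.
move=> le; split=> [g g' A|i j].
  by apply/rowP => i; rewrite !mxE; apply: A; have := ltn_ord i; lia.
by apply: (pf_ext (pf_var (b + j))) => g; rewrite mxE.
Qed.

Lemma rok_mono f f' a b (F : env -> 'M[R]_(a, b)) : (f <= f')%N -> rok f F -> rok f' F.
Proof.
move=> le [A P]; split=> // g g' H; apply: A => i lt; apply: H.
exact: leq_trans lt le.
Qed.

Lemma rok_const f a b (M : 'M[R]_(a, b)) : rok f (fun _ => M).
Proof. by split=> // i j; apply: pf_const. Qed.

Lemma rok_vec_mx f a b (F : env -> 'rV[R]_(a * b)) :
  rok f F -> rok f (fun g => vec_mx (F g)).
Proof.
case=> A P; split=> [g g' H|i j]; first by rewrite (A _ _ H).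
by apply: (pf_ext (P 0 (mxvec_index i j))) => g; rewrite mxE.
Qed.

Lemma rok_row f a b (F : env -> 'M[R]_(a, b)) i :
  rok f F -> rok f (fun g => row i (F g)).
Proof.
case=> A P; split=> [g g' H|i' j]; first by rewrite (A _ _ H).
by apply: (pf_ext (P i j)) => g; rewrite mxE.
Qed.

Lemma pf_dot f d (X U : env -> 'rV[R]_d) : rok f X -> rok f U ->
  pf (fun g => dotv (X g) (U g)).
Proof.
case=> _ PX [_ PU]; apply: (pf_sum (index_enum 'I_d)) => j.
exact: pf_mul.
Qed.

Lemma agree_updf f k g v : agree f (updf g f k v) g.
Proof. by move=> i lt; rewrite /updf leqNgt lt. Qed.

Lemma rdv_updf f k g v : rdv (updf g f k v) f k = \row_(i < k) v i.
Proof.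
apply/rowP => i; rewrite !mxE /updf leq_addr ltn_add2l ltn_ord /=.
by rewrite addKn.
Qed.

Lemma def_exrow f k (Q : env -> 'rV[R]_k -> Prop) :
  (forall g g' y, agree f g g' -> (Q g y <-> Q g' y)) ->
  fodef (fun g => Q g (rdv g f k)) -> fodef (fun g => exists y, Q g y).
Proof.
move=> HQ H; apply: (def_ext (def_ex_updf f k H)) => g; split.
  case=> v; rewrite rdv_updf (HQ _ _ _ (@agree_updf f k g v)) => Hv.
  by exists (\row_(i < k) v i).
case=> y Hy; exists (fun i => if insub i is Some j then y 0 j else 0).
rewrite (HQ _ _ _ (@agree_updf f k g _)) rdv_updf.
suff -> : \row_(i < k) (if insub (val i) is Some j then y 0 j else 0) = y by [].
by apply/rowP => i; rewrite mxE valK.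
Qed.

Lemma def_allrow f k (Q : env -> 'rV[R]_k -> Prop) :
  (forall g g' y, agree f g g' -> (Q g y <-> Q g' y)) ->
  fodef (fun g => Q g (rdv g f k)) -> fodef (fun g => forall y, Q g y).
Proof.
move=> HQ H.
have H1 : fodef (fun g => exists y, ~ Q g y).
  apply: (@def_exrow f k (fun g y => ~ Q g y)); last exact: def_not.
  by move=> g g' y A; rewrite (HQ _ _ _ A).
apply: (def_ext (def_not H1)) => g; split.
  by move=> N y; apply: NNPP => NQ; apply: N; exists y.
by move=> A [y]; apply.
Qed.

Lemma def_exmat f a b (Q : env -> 'M[R]_(a, b) -> Prop) :
  (forall g g' y, agree f g g' -> (Q g y <-> Q g' y)) ->
  fodef (fun g => Q g (vec_mx (rdv g f (a * b)))) -> fodef (fun g => exists M, Q g M).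
Proof.
move=> HQ H.
have := @def_exrow f (a * b) (fun g r => Q g (vec_mx r)) (fun g g' y => HQ g g' _) H.
move=> H'; apply: (def_ext H') => g; split; case=> M HM; first by exists (vec_mx M).
by exists (mxvec M); rewrite mxvecK.
Qed.

Lemma def_allmat f a b (Q : env -> 'M[R]_(a, b) -> Prop) :
  (forall g g' y, agree f g g' -> (Q g y <-> Q g' y)) ->
  fodef (fun g => Q g (vec_mx (rdv g f (a * b)))) -> fodef (fun g => forall M, Q g M).
Proof.
move=> HQ H.
have := @def_allrow f (a * b) (fun g r => Q g (vec_mx r)) (fun g g' y => HQ g g' _) H.
move=> H'; apply: (def_ext H') => g; split => HM M; first by rewrite -(mxvecK M).
exact: HM.
Qed.
End FO.
Section Math1.
Variables (R : realType) (d : nat).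
Implicit Types (X : seq 'rV[R]_d) (u x w : 'rV[R]_d).

Definition Xs K (M : 'M[R]_(K, d)) : seq 'rV[R]_d := [seq row k M | k <- enum 'I_K].

Lemma size_Xs K (M : 'M[R]_(K, d)) : size (Xs M) = K.
Proof. by rewrite size_map size_enum_ord. Qed.

Lemma Xs_nth K (M : 'M[R]_(K, d)) (k : 'I_K) : (Xs M)`_k = row k M.
Proof.
rewrite (nth_map k) ?size_enum_ord //.
by congr (row _ M); apply: val_inj; rewrite /= nth_enum_ord.
Qed.

Lemma mem_Xs K (M : 'M[R]_(K, d)) x : x \in Xs M <-> exists k, x = row k M.
Proof.
split; first by case/mapP => k _ ->; exists k.
by case=> k ->; apply: map_f; rewrite mem_enum.
Qed.

Lemma Xs_nil K (M : 'M[R]_(K, d)) : (0 < K)%N -> Xs M != [::].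
Proof. by move=> hK; rewrite -size_eq0 size_Xs -lt0n. Qed.

Lemma dotv_sum K (c : 'I_K -> R) (p : 'I_K -> 'rV[R]_d) u :
  dotv (\sum_k c k *: p k) u = \sum_k c k * dotv (p k) u.
Proof.
rewrite /dotv; under eq_bigr do rewrite summxE big_distrl /=.
rewrite exchange_big /=; apply: eq_bigr => k _; rewrite big_distrr /=.
by apply: eq_bigr => j _; rewrite mxE mulrA.
Qed.

Lemma bigmax_props (s : seq 'rV[R]_d) (F : 'rV[R]_d -> R) (i0 : R) :
  let M := \big[Num.max/i0]_(x <- s) F x in
  i0 <= M /\ (forall x, x \in s -> F x <= M) /\ (M = i0 \/ exists2 x, x \in s & M = F x).
Proof.
elim: s => [|y s IH] /=; first by rewrite big_nil; split=> //; split=> //; left.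
rewrite big_cons; case: IH => [H0 [H1 H2]].
split; first by rewrite le_max H0 orbT.
split.
  by move=> x; rewrite in_cons => /orP[/eqP->|/H1 h]; rewrite le_max ?lexx ?h ?orbT.
case: (leP (F y) (\big[Num.max/i0]_(j <- s) F j)) => h.
  case: H2 => [->|[x xs ->]]; [by left|right; exists x => //].
  by rewrite in_cons xs orbT.
by right; exists y; rewrite ?mem_head.
Qed.

Lemma hsupp_ub X u x : x \in X -> dotv x u <= hsupp X u.
Proof. by case: (bigmax_props X (fun x => dotv x u) (dotv (head 0 X) u)) => _ [H _] xX; apply: H. Qed.

Lemma hsupp_attain X u : X != [::] -> exists2 x, x \in X & hsupp X u = dotv x u.
Proof.
case: X => // x0 X _.
case: (bigmax_props (x0 :: X) (fun x => dotv x u) (dotv (head 0 (x0 :: X)) u)) => _ [_ [H|H]] //.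
by exists x0; rewrite ?mem_head.
Qed.

Lemma hsupp_char X u a : X != [::] ->
  hsupp X u = a <-> (forall x, x \in X -> dotv x u <= a) /\ exists2 x, x \in X & dotv x u = a.
Proof.
move=> nX; split.
  move=> <-; split; first by move=> x; apply: hsupp_ub.
  by case: (hsupp_attain u nX) => x xX ->; exists x.
case=> H [x xX xa]; subst a; apply: le_anti; rewrite hsupp_ub // andbT.
by case: (hsupp_attain u nX) => y yX ->; apply: H.
Qed.

Lemma conv_size X K (e : size X = K) x :
  conv X x <-> exists lam : 'I_K -> R,
    (forall i, 0 <= lam i) /\ \sum_i lam i = 1 /\ x = \sum_(i < K) lam i *: X`_i.
Proof. by subst K. Qed.

Lemma conv_le X u x : conv X x -> dotv x u <= hsupp X u.
Proof.
case=> lam [l0 [l1 ->]]; rewrite dotv_sum.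
apply: (@le_trans _ _ (\sum_i lam i * hsupp X u)).
  by apply: ler_sum => i _; apply: ler_wpM2l => //; apply: hsupp_ub; apply: mem_nth.
by rewrite -mulr_suml l1 mul1r.
Qed.

Lemma mem_conv X x : x \in X -> conv X x.
Proof.
move=> xX; have lt : (index x X < size X)%N by rewrite index_mem.
pose i0 := Ordinal lt.
exists (fun i => (i == i0)%:R); split; first by move=> i; rewrite ler0n.
split.
  by rewrite (bigD1 i0) //= eqxx big1 ?addr0 // => i /negbTE ->.
rewrite (bigD1 i0) //= eqxx scale1r big1 ?addr0 ?nth_index //.
by move=> i /negbTE ->; rewrite scale0r.
Qed.

Lemma conv_comb X K (p : 'I_K -> 'rV[R]_d) (lam : 'I_K -> R) :
  (forall k, conv X (p k)) -> (forall k, 0 <= lam k) -> \sum_k lam k = 1 ->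
  conv X (\sum_k lam k *: p k).
Proof.
move=> Hp l0 l1.
have [mu Hmu] := fin_all_exists Hp.
exists (fun i => \sum_k lam k * mu k i); split.
  by move=> i; apply: sumr_ge0 => k _; apply: mulr_ge0 => //; case: (Hmu k).
split.
  rewrite exchange_big /= -l1; apply: eq_bigr => k _.
  by rewrite -big_distrr /=; case: (Hmu k) => _ [-> _]; rewrite mulr1.
rewrite [RHS](eq_bigr (fun i => \sum_k (lam k * mu k i) *: X`_i)); last first.
  by move=> i _; rewrite scaler_suml.
rewrite exchange_big /=; apply: eq_bigr => k _.
case: (Hmu k) => _ [_ ->]; rewrite scaler_sumr; apply: eq_bigr => i _.
by rewrite scalerA.
Qed.


Definition Pconv K (M : 'M[R]_(K, d)) (x : 'rV[R]_d) := exists lam : 'rV[R]_K,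
  (forall k, 0 <= lam 0 k) /\ \sum_k lam 0 k = 1 /\
  (forall j, x 0 j = \sum_k lam 0 k * M k j).

Lemma conv_Xs K (M : 'M[R]_(K, d)) x : conv (Xs M) x <-> Pconv M x.
Proof.
rewrite (conv_size (size_Xs M) x); split.
  case=> lam [l0 [l1 ->]]; exists (\row_k lam k); split=> [k|]; first by rewrite mxE.
  split; first by under eq_bigr do rewrite mxE.
  move=> j; rewrite summxE; apply: eq_bigr => k _.
  by rewrite !mxE Xs_nth mxE.
case=> lam [l0 [l1 E]]; exists (fun k => lam 0 k); do 2!split => //.
apply/rowP => j; rewrite E summxE; apply: eq_bigr => k _.
by rewrite !mxE Xs_nth mxE.
Qed.

Definition Pmax K (M : 'M[R]_(K, d)) (u : 'rV[R]_d) (a : R) :=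
  (forall k, dotv (row k M) u <= a) /\ (exists k, dotv (row k M) u = a).

Lemma hsupp_Xs K (M : 'M[R]_(K, d)) u a : (0 < K)%N ->
  hsupp (Xs M) u = a <-> Pmax M u a.
Proof.
move=> hK; rewrite (hsupp_char _ _ (Xs_nil M hK)); split.
  case=> H [x /mem_Xs [k ->] E]; split; last by exists k.
  by move=> k'; apply: H; apply/mem_Xs; exists k'.
case=> H [k E]; split; last by exists (row k M) => //; apply/mem_Xs; exists k.
by move=> x /mem_Xs [k' ->].
Qed.

Definition Pncone K (M : 'M[R]_(K, d)) (w u : 'rV[R]_d) :=
  forall x : 'rV[R]_d, Pconv M x -> Pmax M w (dotv x w) -> Pmax M u (dotv x u).

Lemma ncone_Xs K (M : 'M[R]_(K, d)) w u : (0 < K)%N ->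
  ncone (Xs M) w u <-> Pncone M w u.
Proof.
move=> hK; split=> H x.
  move=> /conv_Xs cx /(hsupp_Xs _ _ _ hK) E.
  by apply/(hsupp_Xs _ _ _ hK); symmetry; apply: H => //; rewrite E.
move=> /conv_Xs cx E; symmetry; apply/(hsupp_Xs _ _ _ hK); apply: H => //.
by apply/(hsupp_Xs _ _ _ hK).
Qed.

End Math1.

Section Math2.
Variables (R : realType) (d n : nat) (V : 'I_n -> 'rV[R]_d)
  (Delta : {set {set 'I_n}}).

Definition Pcone (S : {set 'I_n}) (u : 'rV[R]_d) := exists lam : 'rV[R]_n,
  (forall i, 0 <= lam 0 i) /\ (forall i, i \notin S -> lam 0 i = 0) /\
  (forall j, u 0 j = \sum_i lam 0 i * V i 0 j).

Lemma cone_P S u : cone_of V S u <-> Pcone S u.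
Proof.
split.
  case=> lam [l0 [lS ->]]; exists (\row_i lam i); split=> [i|]; first by rewrite mxE.
  split=> [i iS|j]; first by rewrite mxE lS.
  by rewrite summxE; apply: eq_bigr => i _; rewrite !mxE.
case=> lam [l0 [lS E]]; exists (fun i => lam 0 i); do 2!split => //.
by apply/rowP => j; rewrite E summxE; apply: eq_bigr => i _; rewrite !mxE.
Qed.

Definition Pdef K (M : 'M[R]_(K, d)) := forall S, S \in Delta ->
  exists w : 'rV[R]_d, forall u : 'rV[R]_d, Pcone S u -> Pncone M w u.

Lemma defcone_Xs K (M : 'M[R]_(K, d)) : (0 < K)%N ->
  in_defcone V Delta (Xs M) <-> Pdef M.
Proof.
move=> hK; split.
  case=> _ H S HS; case: (H S HS) => w Hw; exists w => u /cone_P cu.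
  by apply/ncone_Xs => //; apply: Hw.
move=> H; split; first exact: Xs_nil.
move=> S HS; case: (H S HS) => w Hw; exists w => u /cone_P cu.
by apply/ncone_Xs => //; apply: Hw.
Qed.

End Math2.

Section Math3.
Variables (R : realType) (d n : nat) (V : 'I_n -> 'rV[R]_d)
  (Delta : {set {set 'I_n}}).
Hypothesis hF : simplicial_fan V Delta.
Hypothesis hP : polytopal V Delta.

Lemma complete w : exists2 S, S \in Delta & cone_of V S w.
Proof.
case: hP => X0 [_ [_ H2]]; case: (H2 w) => S HS E; exists S => //.
by apply/E => x _ ->.
Qed.

Lemma K_gt0 : (0 < #|Delta|)%N.
Proof. by case: hF => H0 _; apply/card_gt0P; exists set0. Qed.

Lemma reduce X : in_defcone V Delta X ->
  exists M : 'M[R]_(#|Delta|, d), Pdef V Delta M /\ forall u, hsupp (Xs M) u = hsupp X u.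
Proof.
case=> nX cb.
have : forall k : 'I_#|Delta|, exists p : 'rV[R]_d * 'rV[R]_d,
    [/\ p.2 \in X, dotv p.2 p.1 = hsupp X p.1 &
        forall u, cone_of V (enum_val k) u -> ncone X p.1 u].
  move=> k; case: (cb _ (enum_valP k)) => w Hw.
  case: (hsupp_attain w nX) => x xX E.
  by exists (w, x); split.
case/fin_all_exists => p Hp.
pose M := \matrix_k (p k).2.
have rowM k : row k M = (p k).2 by rewrite rowK.
have hK := K_gt0.
have Hh u : hsupp (Xs M) u = hsupp X u.
  apply/(hsupp_char _ _ (Xs_nil M hK)); split.
    by move=> x /mem_Xs [k ->]; rewrite rowM; apply: hsupp_ub; case: (Hp k).
  case: (complete u) => S HS cu.
  pose k := enum_rank_in HS S.
  have ek : enum_val k = S by rewrite /k enum_rankK_in.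
  case: (Hp k) => xX Ew Hn.
  exists (p k).2; first by apply/mem_Xs; exists k; rewrite rowM.
  by apply: (Hn u); rewrite ?ek // ; apply: mem_conv.
exists M; split => //.
move=> S HS; pose k := enum_rank_in HS S.
have ek : enum_val k = S by rewrite /k enum_rankK_in.
case: (Hp k) => xX Ew Hn.
exists (p k).1 => u /cone_P cu.
apply/(ncone_Xs _ _ _ hK) => x cx; rewrite !Hh; apply: (Hn u); first by rewrite ek.
case/conv_Xs: cx => lam [l0 [l1 E]].
have -> : x = \sum_k lam 0 k *: row k M.
  by apply/rowP => j; rewrite E summxE; apply: eq_bigr => i _; rewrite !mxE.
apply: conv_comb => // k'; apply: mem_conv; rewrite rowM; by case: (Hp k').
Qed.

Variable m : nat.
Implicit Types (U : 'M[R]_(m, d)) (y : 'rV[R]_m).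

Definition Ple K U y (M M' : 'M[R]_(K, d)) :=
  exists s t : {ffun 'I_m -> 'I_K},
  (forall i k, dotv (row k M) (row i U) <= dotv (row (s i) M) (row i U)) /\
  (forall i k, dotv (row k M') (row i U) <= dotv (row (t i) M') (row i U)) /\
  m%:R^-1 * \sum_i (dotv (row (s i) M) (row i U) - y 0 i) ^+ 2 <=
  m%:R^-1 * \sum_i (dotv (row (t i) M') (row i U) - y 0 i) ^+ 2.

Lemma loss_argmax K (M : 'M[R]_(K, d)) U y (s : 'I_m -> 'I_K) : (0 < K)%N ->
  (forall i k, dotv (row k M) (row i U) <= dotv (row (s i) M) (row i U)) ->
  lsq_loss U y (Xs M) = m%:R^-1 * \sum_i (dotv (row (s i) M) (row i U) - y 0 i) ^+ 2.
Proof.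
move=> hK Hs; rewrite /lsq_loss; congr (_ * _); apply: eq_bigr => i _.
congr ((_ - _) ^+ 2); apply/(hsupp_Xs _ _ _ hK); split; last by exists (s i).
exact: Hs.
Qed.

Lemma argmax_ex K (M : 'M[R]_(K, d)) U : (0 < K)%N -> exists s : {ffun 'I_m -> 'I_K},
  forall i k, dotv (row k M) (row i U) <= dotv (row (s i) M) (row i U).
Proof.
move=> hK.
have : forall i : 'I_m, exists k0 : 'I_K,
    forall k, dotv (row k M) (row i U) <= dotv (row k0 M) (row i U).
  move=> i; have [H [k0 E]] := (hsupp_Xs M (row i U) (hsupp (Xs M) (row i U)) hK).1 erefl.
  by exists k0 => k; rewrite E; apply: H.
case/fin_all_exists => s Hs; exists [ffun i => s i] => i k; rewrite ffunE; exact: Hs.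
Qed.

Lemma Ple_loss K U y (M M' : 'M[R]_(K, d)) : (0 < K)%N ->
  Ple U y M M' <-> lsq_loss U y (Xs M) <= lsq_loss U y (Xs M').
Proof.
move=> hK; split.
  by case=> s [t [Hs [Ht Hl]]]; rewrite (loss_argmax y hK Hs) (loss_argmax y hK Ht).
case: (argmax_ex M U hK) => s Hs; case: (argmax_ex M' U hK) => t Ht.
by rewrite (loss_argmax y hK Hs) (loss_argmax y hK Ht) => Hl; exists s, t.
Qed.

Lemma loss_eq U y X X' : (forall u, hsupp X u = hsupp X' u) ->
  lsq_loss U y X = lsq_loss U y X'.
Proof. by move=> H; rewrite /lsq_loss; under eq_bigr do rewrite H. Qed.

Definition Psupp K (M : 'M[R]_(K, d)) (h : 'rV[R]_n) := forall j, Pmax M (V j) (h 0 j).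

Definition Plse K U y h := exists M : 'M[R]_(K, d),
  Pdef V Delta M /\ Psupp M h /\ forall M' : 'M[R]_(K, d), Pdef V Delta M' -> Ple U y M M'.

Lemma lse_P U y h : lse V Delta U y h <-> Plse #|Delta| U y h.
Proof.
have hK := K_gt0; split.
  case=> X [HX [-> Hmin]]; case: (reduce HX) => M [DM HM].
  exists M; split => //; split.
    by move=> j; apply/(hsupp_Xs _ _ _ hK); rewrite mxE HM.
  move=> M' DM'; apply/(Ple_loss _ _ _ _ hK).
  by rewrite (loss_eq U y HM); apply: Hmin; apply/defcone_Xs.
case=> M [DM [HS Hle]]; exists (Xs M); split; first by apply/defcone_Xs.
split.
  by apply/rowP => j; rewrite mxE; symmetry; apply/(hsupp_Xs _ _ _ hK); apply: HS.
move=> X' HX'; case: (reduce HX') => M' [DM' HM'].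
rewrite -(loss_eq U y HM'); apply/(Ple_loss _ _ _ _ hK); exact: Hle.
Qed.

Definition PA K U := forall y : 'rV[R]_m, exists a : 'rV[R]_n, forall b : 'rV[R]_n,
  (Plse K U y b -> forall j, b 0 j = a 0 j) /\ ((forall j, b 0 j = a 0 j) -> Plse K U y b).

Lemma A_P U : (forall y, is_singleton (lse V Delta U y)) <-> PA #|Delta| U.
Proof.
split=> H y; case: (H y) => a Ha; exists a => b.
  split; first by move/lse_P/Ha => ->.
  by move=> E; apply/lse_P/Ha; apply/rowP.
split; first by move/lse_P/(Ha b).1 => E; apply/rowP.
by move=> ->; apply/lse_P/(Ha a).2.
Qed.

End Math3.

Section Defl.
Variables (R : realType) (d n : nat) (V : 'I_n -> 'rV[R]_d)
  (Delta : {set {set 'I_n}}).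
Local Notation env := (nat -> R).

Ltac rk := first [eassumption | (apply: rok_row; eassumption) | apply: rok_const].

Lemma rok_eq f a b (F : env -> 'M[R]_(a, b)) g g' : rok f F -> agree f g g' -> F g = F g'.
Proof. by case=> H _; apply: H. Qed.
Lemma rok_pf f a b (F : env -> 'M[R]_(a, b)) i j : rok f F -> pf (fun g => F g i j).
Proof. by case=> _; apply. Qed.

Lemma rok_rdvS f k : rok (f + k) (fun g : env => rdv g f k).
Proof. exact: rok_rdv. Qed.

Lemma def_Pmax f K (Mr : env -> 'M[R]_(K, d)) (ur : env -> 'rV[R]_d) (ar : env -> R) :
  rok f Mr -> rok f ur -> pf ar -> fodef (fun g => Pmax (Mr g) (ur g) (ar g)).
Proof.
move=> HM Hu Ha; apply: def_and.
  by apply: def_allfin => k; apply: def_le => //; apply: (pf_dot (rok_row k HM) Hu).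
by apply: def_exfin => k; apply: def_eq => //; apply: (pf_dot (rok_row k HM) Hu).
Qed.

Lemma def_Pconv f K (Mr : env -> 'M[R]_(K, d)) (xr : env -> 'rV[R]_d) :
  rok f Mr -> rok f xr -> fodef (fun g => Pconv (Mr g) (xr g)).
Proof.
move=> HM Hx.
apply: (@def_exrow _ f K (fun g lam => (forall k, 0 <= lam 0 k) /\ \sum_k lam 0 k = 1 /\
  (forall j, xr g 0 j = \sum_k lam 0 k * Mr g k j))).
  by move=> g g' lam A; rewrite (rok_eq HM A) (rok_eq Hx A).
have HL := rok_rdvS f K.
have HM' := rok_mono (leq_addr K f) HM; have Hx' := rok_mono (leq_addr K f) Hx.
apply: def_and; first by apply: def_allfin => k; apply: def_le; [apply: pf_const|(apply: rok_pf; rk)].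
apply: def_and.
  by apply: def_eq; [apply: pf_sum => k; (apply: rok_pf; rk)|apply: pf_const].
apply: def_allfin => j; apply: def_eq; first by apply: rok_pf; rk.
by apply: pf_sum => k; apply: pf_mul; apply: rok_pf; rk.
Qed.

Lemma def_Pncone f K (Mr : env -> 'M[R]_(K, d)) (wr ur : env -> 'rV[R]_d) :
  rok f Mr -> rok f wr -> rok f ur -> fodef (fun g => Pncone (Mr g) (wr g) (ur g)).
Proof.
move=> HM Hw Hu.
apply: (@def_allrow _ f d (fun g x => Pconv (Mr g) x -> Pmax (Mr g) (wr g) (dotv x (wr g)) ->
  Pmax (Mr g) (ur g) (dotv x (ur g)))).
  by move=> g g' x A; rewrite (rok_eq HM A) (rok_eq Hw A) (rok_eq Hu A).
have HX := rok_rdvS f d.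
have HM' := rok_mono (leq_addr d f) HM; have Hw' := rok_mono (leq_addr d f) Hw.
have Hu' := rok_mono (leq_addr d f) Hu.
apply: def_imp; first exact: (def_Pconv HM' HX).
apply: def_imp; apply: (@def_Pmax (f + d)) => //; apply: (@pf_dot _ (f + d)); rk.
Qed.

Lemma def_Pcone f S (ur : env -> 'rV[R]_d) : rok f ur -> fodef (fun g => Pcone V S (ur g)).
Proof.
move=> Hu.
apply: (@def_exrow _ f n (fun g lam => (forall i, 0 <= lam 0 i) /\
  (forall i, i \notin S -> lam 0 i = 0) /\ (forall j, ur g 0 j = \sum_i lam 0 i * V i 0 j))).
  by move=> g g' lam A; rewrite (rok_eq Hu A).
have HL := rok_rdvS f n; have Hu' := rok_mono (leq_addr n f) Hu.
apply: def_and; first by apply: def_allfin => k; apply: def_le; [apply: pf_const|(apply: rok_pf; rk)].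
apply: def_and.
  apply: def_allfin => i; apply: def_imp; first exact: def_bool.
  by apply: def_eq; [(apply: rok_pf; rk)|apply: pf_const].
apply: def_allfin => j; apply: def_eq; first by apply: rok_pf; rk.
by apply: pf_sum => i; apply: pf_mul; [(apply: rok_pf; rk)|apply: pf_const].
Qed.

Lemma def_Pdef f K (Mr : env -> 'M[R]_(K, d)) :
  rok f Mr -> fodef (fun g => Pdef V Delta (Mr g)).
Proof.
move=> HM; apply: def_allfin => S; apply: def_imp; first exact: def_bool.
apply: (@def_exrow _ f d (fun g w => forall u, Pcone V S u -> Pncone (Mr g) w u)).
  by move=> g g' w A; rewrite (rok_eq HM A).
have HW := rok_rdvS f d; have HM' := rok_mono (leq_addr d f) HM.
apply: (@def_allrow _ (f + d) d (fun g u => Pcone V S u -> Pncone (Mr g) (rdv g f d) u)).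
  by move=> g g' u A; rewrite (rok_eq HM' A) (rok_eq HW A).
have HU := rok_rdvS (f + d) d.
have HM'' := rok_mono (leq_addr d _) HM'; have HW' := rok_mono (leq_addr d _) HW.
apply: def_imp; first exact: (def_Pcone S HU).
exact: (def_Pncone HM'' HW' HU).
Qed.

Lemma def_Psupp f K (Mr : env -> 'M[R]_(K, d)) (hr : env -> 'rV[R]_n) :
  rok f Mr -> rok f hr -> fodef (fun g => Psupp V (Mr g) (hr g)).
Proof.
move=> HM Hh; apply: def_allfin => j; apply: (@def_Pmax f) => //; first exact: rok_const.
by apply: rok_pf; rk.
Qed.

Variable m : nat.

Lemma def_Ple f K (Ur : env -> 'M[R]_(m, d)) (yr : env -> 'rV[R]_m)
  (Mr Mr' : env -> 'M[R]_(K, d)) :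
  rok f Ur -> rok f yr -> rok f Mr -> rok f Mr' ->
  fodef (fun g => Ple (Ur g) (yr g) (Mr g) (Mr' g)).
Proof.
move=> HU Hy HM HM'.
apply: def_exfin => s; apply: def_exfin => t.
have Hd (Nr : env -> 'M[R]_(K, d)) k i : rok f Nr ->
    pf (fun g => dotv (row k (Nr g)) (row i (Ur g))).
  by move=> HN; apply: (@pf_dot _ f); apply: rok_row.
apply: def_and.
  by apply: def_allfin => i; apply: def_allfin => k; apply: def_le; apply: Hd.
apply: def_and.
  by apply: def_allfin => i; apply: def_allfin => k; apply: def_le; apply: Hd.
apply: def_le; apply: pf_mul; try apply: pf_const.
  apply: pf_sum => i; apply: (pf_ext (pf_mul (pf_sub (Hd _ (s i) i HM) (rok_pf 0 i Hy))
     (pf_sub (Hd _ (s i) i HM) (rok_pf 0 i Hy)))) => g; by rewrite expr2.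
apply: pf_sum => i; apply: (pf_ext (pf_mul (pf_sub (Hd _ (t i) i HM') (rok_pf 0 i Hy))
   (pf_sub (Hd _ (t i) i HM') (rok_pf 0 i Hy)))) => g; by rewrite expr2.
Qed.

Lemma def_Plse f K (Ur : env -> 'M[R]_(m, d)) (yr : env -> 'rV[R]_m) (hr : env -> 'rV[R]_n) :
  rok f Ur -> rok f yr -> rok f hr ->
  fodef (fun g => Plse V Delta K (Ur g) (yr g) (hr g)).
Proof.
move=> HU Hy Hh.
apply: (@def_exmat _ f K d (fun g M => Pdef V Delta M /\ Psupp V M (hr g) /\
  forall M', Pdef V Delta M' -> Ple (Ur g) (yr g) M M')).
  by move=> g g' M A; rewrite (rok_eq HU A) (rok_eq Hy A) (rok_eq Hh A).
have HM := rok_vec_mx (rok_rdvS f (K * d)).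
have le := leq_addr (K * d) f.
have HU' := rok_mono le HU; have Hy' := rok_mono le Hy; have Hh' := rok_mono le Hh.
apply: def_and; first exact: def_Pdef HM.
apply: def_and; first exact: (def_Psupp HM Hh').
apply: (@def_allmat _ (f + K * d) K d (fun g M' => Pdef V Delta M' ->
  Ple (Ur g) (yr g) (vec_mx (rdv g f (K * d))) M')).
  by move=> g g' M' A; rewrite (rok_eq HU' A) (rok_eq Hy' A) (rok_eq HM A).
have HM' := rok_vec_mx (rok_rdvS (f + K * d) (K * d)).
have le' := leq_addr (K * d) (f + K * d).
apply: def_imp; first exact: def_Pdef HM'.
apply: (@def_Ple (f + K * d + K * d)); [exact: rok_mono le' HU'|exact: rok_mono le' Hy'|exact: rok_mono le' HM|exact: HM'].
Qed.

Lemma def_PA K : fodef (fun g => PA V Delta K (vec_mx (rdv g 0 (m * d)))).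
Proof.
have HU := rok_vec_mx (rok_rdvS 0 (m * d)).
set f0 := (0 + m * d)%N in HU.
apply: (@def_allrow _ f0 m (fun g y => exists a : 'rV[R]_n, forall b : 'rV[R]_n,
  (Plse V Delta K (vec_mx (rdv g 0 (m * d))) y b -> forall j, b 0 j = a 0 j) /\
  ((forall j, b 0 j = a 0 j) -> Plse V Delta K (vec_mx (rdv g 0 (m * d))) y b))).
  by move=> g g' y A; rewrite (rok_eq HU A).
have Hy := rok_rdvS f0 m; have HU1 := rok_mono (leq_addr m f0) HU.
apply: (@def_exrow _ (f0 + m) n (fun g a => forall b : 'rV[R]_n,
  (Plse V Delta K (vec_mx (rdv g 0 (m * d))) (rdv g f0 m) b -> forall j, b 0 j = a 0 j) /\
  ((forall j, b 0 j = a 0 j) -> Plse V Delta K (vec_mx (rdv g 0 (m * d))) (rdv g f0 m) b))).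
  by move=> g g' a A; rewrite (rok_eq HU1 A) (rok_eq Hy A).
have Ha := rok_rdvS (f0 + m) n.
have HU2 := rok_mono (leq_addr n _) HU1; have Hy2 := rok_mono (leq_addr n _) Hy.
apply: (@def_allrow _ (f0 + m + n) n (fun g b =>
  (Plse V Delta K (vec_mx (rdv g 0 (m * d))) (rdv g f0 m) b ->
     forall j, b 0 j = rdv g (f0 + m) n 0 j) /\
  ((forall j, b 0 j = rdv g (f0 + m) n 0 j) ->
     Plse V Delta K (vec_mx (rdv g 0 (m * d))) (rdv g f0 m) b))).
  by move=> g g' b A; rewrite (rok_eq HU2 A) (rok_eq Hy2 A) (rok_eq Ha A).
have Hb := rok_rdvS (f0 + m + n) n.
have HU3 := rok_mono (leq_addr n _) HU2; have Hy3 := rok_mono (leq_addr n _) Hy2.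
have Ha3 := rok_mono (leq_addr n _) Ha.
have HP := def_Plse K HU3 Hy3 Hb.
have HE : fodef (fun g : env => forall j, rdv g (f0 + m + n) n 0 j = rdv g (f0 + m) n 0 j).
  apply: def_allfin => j. apply: def_eq; apply: rok_pf; rk.
by apply: def_and; apply: def_imp.
Qed.

End Defl.

Theorem proposition3p8 (R : realType) (m d n : nat) (V : 'I_n -> 'rV[R]_d)
  (Delta : {set {set 'I_n}}) :
  simplicial_fan V Delta -> polytopal V Delta ->
  semialgebraic_mx (fun U : 'M[R]_(m, d) =>
    forall y : 'rV[R]_m, is_singleton (lse V Delta U y)).
Proof.
move=> hF hP.
case: (def_PA V Delta m #|Delta|) => f Hf.
case: (qe_sa (m * d) f) => sf Hsf.
exists sf => x; rewrite Hsf -Hf (A_P hF hP).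
suff -> : rdv (nth0 (env x)) 0 (m * d) = \row_k x k by [].
apply/rowP => k; rewrite !mxE /nth0 /env add0n (nth_map k) ?size_enum_ord //.
by congr (x _); apply: val_inj; rewrite /= nth_enum_ord.
Qed.
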